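(* Let $q\in\,]0,1[$, $\omega\ge 0$, let $I$ be an interval containing $\omega_0:=\omega/(1-q)$, let $s\in I$, $\bar\theta>0$, $\theta_0\in\,]-\bar\theta,\bar\theta[$, and let $g:I\times\,]-\bar\theta,\bar\theta[\,\to\mathbb{R}$ be such that $g(t,\cdot)$ is differentiable at $\theta_0$ uniformly in $[s]_{q,\omega}$. If $\int_{\omega_0}^s g(t,\theta_0)\,\tilde d_{q,\omega}t$ exists, then $G(\theta):=\int_{\omega_0}^s g(t,\theta)\,\tilde d_{q,\omega}t$, for $\theta$ near $\theta_0$, is differentiable at $\theta_0$ with $$G'(\theta_0)=\int_{\omega_0}^s\partial_2 g(t,\theta_0)\,\tilde d_{q,\omega}t.$$
   Context: $\sigma(t):=qt+\omega$, $\sigma^{-1}(t):=q^{-1}(t-\omega)$, $\sigma^k$ is the $k$-fold composition of $\sigma$; $[s]_{q,\omega}:=\{\sigma^{2n+1}(s):n\in\mathbb{N}_0\}\cup\{\omega_0\}$. $g(t,\cdot)$ is differentiable at $\theta_0$ uniformly in $[s]_{q,\omega}$ if for every $\varepsilon>0$ there is $\delta>0$ such that $0<|\theta-\theta_0|<\delta$ implies $\left|\frac{g(t,\theta)-g(t,\theta_0)}{\theta-\theta_0}-\partial_2 g(t,\theta_0)\right|<\varepsilon$ for all $t\in[s]_{q,\omega}$, where $\partial_2 g=\partial g/\partial\theta$. Hahn symmetric integral: $\int_{\omega_0}^x F(t)\,\tilde d_{q,\omega}t:=(\sigma^{-1}(x)-\sigma(x))\sum_{n=0}^\infty q^{2n+1}F(\sigma^{2n+1}(x))$,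 existing when the series converges. *)

(* Defs.v *)
From Stdlib Require Import Reals.
From Coquelicot Require Import Coquelicot.
Open Scope R_scope.

Definition sigma (q w t : R) : R := q * t + w.
Definition sigma_inv (q w t : R) : R := (t - w) / q.
Fixpoint sigma_iter (q w : R) (k : nat) (t : R) : R :=
  match k with
  | O => t
  | S k' => sigma q w (sigma_iter q w k' t)
  end.

Definition omega0 (q w : R) : R := w / (1 - q).

Definition orbit_set (q w s t : R) : Prop :=
  (exists n : nat, t = sigma_iter q w (2 * n + 1) s) \/ t = omega0 q w.

Definition is_interval (I : R -> Prop) : Prop :=
  forall a b c, I a -> I b -> a <= c -> c <= b -> I c.

Definition hahn_term (q w : R) (F : R -> R) (x : R) (n : nat) : R :=
  q ^ (2 * n + 1) * F (sigma_iter q w (2 * n + 1) x).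

Definition hahn_sym_int_exists (q w : R) (F : R -> R) (x : R) : Prop :=
  ex_series (hahn_term q w F x).

Definition hahn_sym_int (q w : R) (F : R -> R) (x : R) : R :=
  (sigma_inv q w x - sigma q w x) * Series (hahn_term q w F x).

(* g(t,.) is differentiable at th0 uniformly in [s]_{q,omega}, with
   partial derivative d2g t (= dg/dtheta (t, th0)); theta ranges over
   the domain ]-thb, thb[ of the second variable. *)
Definition unif_diff_at (q w s thb : R) (g : R -> R -> R) (th0 : R)
    (d2g : R -> R) : Prop :=
  forall eps : R, 0 < eps -> exists delta : R, 0 < delta /\
    forall th : R, - thb < th < thb -> 0 < Rabs (th - th0) < delta ->
      forall t : R, orbit_set q w s t ->
        Rabs ((g t th - g t th0) / (th - th0) - d2g t) < eps.

(* Main.v *)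
Require Import Defs.
From Stdlib Require Import Reals Lra.
From Coquelicot Require Import Coquelicot.
Open Scope R_scope.

Lemma is_series_minusR (a b : nat -> R) la lb :
  is_series a la -> is_series b lb -> is_series (fun n => a n - b n) (la - lb).
Proof. intros Ha Hb. exact (is_series_minus a b la lb Ha Hb). Qed.

Lemma is_series_scalR (c : R) (a : nat -> R) la :
  is_series a la -> is_series (fun n => c * a n) (c * la).
Proof. intros Ha. exact (is_series_scal_l c a la Ha). Qed.

Lemma geom_odd (q : R) : 0 < q < 1 ->
  is_series (fun n => q ^ (2 * n + 1)) (q * / (1 - q ^ 2)).
Proof.
  intros Hq.
  apply is_series_ext with (fun n => q * (q ^ 2) ^ n).
  { intros n. rewrite pow_add, <- pow_mult. simpl. ring. }
  apply is_series_scalR. apply is_series_geom.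
  rewrite Rabs_right; simpl; nra.
Qed.

Lemma bound_series (e a : nat -> R) (K S eps : R) :
  (forall n, Rabs (e n) <= eps * a n) -> is_series a K -> is_series e S ->
  Rabs S <= eps * K.
Proof.
  intros Hb Ha He.
  assert (Hea : is_series (fun n => eps * a n) (eps * K)) by (apply is_series_scalR; auto).
  assert (Hx : ex_series (fun n => Rabs (e n))).
  { apply (@ex_series_le R_AbsRing R_CompleteNormedModule) with (fun n => eps * a n).
    - intros n. unfold norm; simpl. rewrite Rabs_Rabsolu. auto.
    - eexists; eauto. }
  rewrite <- (is_series_unique _ _ He).
  eapply Rle_trans. apply Series_Rabs; auto.
  rewrite <- (is_series_unique _ _ Hea).
  apply Series_le. intros n; split; [apply Rabs_pos| auto]. eexists; eauto.
Qed.

Lemma quot_series (T1 T0 d : nat -> R) (L1 L0 Ld h : R) :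
  is_series T1 L1 -> is_series T0 L0 -> is_series d Ld ->
  is_series (fun n => (T1 n - T0 n) / h - d n) ((L1 - L0) / h - Ld).
Proof.
  intros H1 H0 Hd.
  apply is_series_minusR; auto.
  replace ((L1 - L0) / h) with (/ h * (L1 - L0)) by (unfold Rdiv; ring).
  refine (is_series_ext (fun n => / h * (T1 n - T0 n)) _ _ _ _).
  { intros n. simpl. apply Rmult_comm. }
  apply is_series_scalR, is_series_minusR; auto.
Qed.

Theorem lemma3p6 (q w : R) (I : R -> Prop) (s thb th0 : R)
  (g : R -> R -> R) :
  0 < q < 1 -> 0 <= w ->
  is_interval I -> I (omega0 q w) -> I s ->
  0 < thb -> - thb < th0 < thb ->
  unif_diff_at q w s thb g th0 (fun t => Derive (fun th => g t th) th0) ->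
  hahn_sym_int_exists q w (fun t => g t th0) s ->
  (* G(theta) is defined for theta near theta0 *)
  (exists r : R, 0 < r /\ forall th : R, Rabs (th - th0) < r ->
      hahn_sym_int_exists q w (fun t => g t th) s) ->
  hahn_sym_int_exists q w (fun t => Derive (fun th => g t th) th0) s /\
  is_derive (fun th => hahn_sym_int q w (fun t => g t th) s) th0
    (hahn_sym_int q w (fun t => Derive (fun th => g t th) th0) s).
Proof.
  intros Hq Hw _ _ _ Hthb Hth0 Hud Hex0 [r [Hr Hexr]].
  set (D := fun t => Derive (fun th => g t th) th0).
  set (a := fun n : nat => q ^ (2 * n + 1)).
  set (x := fun n : nat => sigma_iter q w (2 * n + 1) s).
  assert (Horb : forall n, orbit_set q w s (x n)) by (intros n; left; exists n; reflexivity).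
  set (K := q * / (1 - q ^ 2)).
  assert (HK : is_series a K) by (apply geom_odd; auto).
  assert (Ha0 : forall n, 0 <= a n) by (intros n; unfold a; apply pow_le; lra).
  destruct Hex0 as [L0 HL0].
  assert (Hexd : ex_series (hahn_term q w D s)).
  { destruct (Hud 1 Rlt_0_1) as [delta [Hdel Hd]].
    set (m := Rmin (Rmin delta r) (Rmin (thb - th0) (thb + th0))).
    assert (Hm : 0 < m).
    { unfold m; repeat apply Rmin_pos; lra. }
    assert (Hm1 : m <= delta /\ m <= r /\ m <= thb - th0 /\ m <= thb + th0).
    { unfold m; pose proof (Rmin_l (Rmin delta r) (Rmin (thb - th0) (thb + th0)));
      pose proof (Rmin_r (Rmin delta r) (Rmin (thb - th0) (thb + th0)));
      pose proof (Rmin_l delta r); pose proof (Rmin_r delta r);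
      pose proof (Rmin_l (thb - th0) (thb + th0)); pose proof (Rmin_r (thb - th0) (thb + th0));
      lra. }
    set (th1 := th0 + m / 2).
    assert (Habs : Rabs (th1 - th0) = m / 2).
    { unfold th1. replace (th0 + m / 2 - th0) with (m/2) by ring. apply Rabs_right; lra. }
    destruct (Hexr th1) as [L1 HL1]. rewrite Habs; lra.
    set (e := fun n => a n * ((g (x n) th1 - g (x n) th0) / (th1 - th0) - D (x n))).
    assert (He : ex_series e).
    { apply (@ex_series_le R_AbsRing R_CompleteNormedModule) with a.
      - intros n. unfold norm; simpl. unfold e. rewrite Rabs_mult, Rabs_right by (apply Rle_ge; auto).
        rewrite <- (Rmult_1_r (a n)) at 2. apply Rmult_le_compat_l; auto.
        left. apply Hd; auto. unfold th1; lra. rewrite Habs; lra.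
      - eexists; eauto. }
    destruct He as [Le HLe].
    eexists.
    apply is_series_ext with (2 := quot_series _ _ _ _ _ _ (th1 - th0) HL1 HL0 HLe).
    intros n. unfold e, hahn_term, D. fold (a n) (x n). change (@eq R ((a n * g (x n) th1 - a n * g (x n) th0) / (th1 - th0) - a n * ((g (x n) th1 - g (x n) th0) / (th1 - th0) - Derive (fun th : R => g (x n) th) th0)) (a n * Derive (fun th : R => g (x n) th) th0)). field.
    intros Hz. rewrite Hz, Rabs_R0 in Habs. lra. }
  split; [exact Hexd|].
  destruct Hexd as [Ld HLd].
  apply is_derive_Reals. intros eps Heps.
  set (c := sigma_inv q w s - Defs.sigma q w s).
  assert (HK0 : 0 <= K).
  { unfold K. apply Rmult_le_pos; [lra|]. left; apply Rinv_0_lt_compat. simpl; nra. }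
  set (eps' := eps / (2 * (Rabs c * K + 1))).
  assert (Hcp : 0 < Rabs c * K + 1) by (pose proof (Rabs_pos c); nra).
  assert (Heps' : 0 < eps').
  { unfold eps'. apply Rdiv_lt_0_compat; lra. }
  destruct (Hud eps' Heps') as [delta [Hdel Hd]].
  set (m := Rmin (Rmin delta r) (Rmin (thb - th0) (thb + th0))).
  assert (Hm : 0 < m).
  { unfold m; repeat apply Rmin_pos; lra. }
  assert (Hm1 : m <= delta /\ m <= r /\ m <= thb - th0 /\ m <= thb + th0).
  { unfold m; pose proof (Rmin_l (Rmin delta r) (Rmin (thb - th0) (thb + th0)));
    pose proof (Rmin_r (Rmin delta r) (Rmin (thb - th0) (thb + th0)));
    pose proof (Rmin_l delta r); pose proof (Rmin_r delta r);
    pose proof (Rmin_l (thb - th0) (thb + th0)); pose proof (Rmin_r (thb - th0) (thb + th0));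
    lra. }
  exists (mkposreal m Hm). intros h Hh Hhm. simpl in Hhm.
  assert (Habs : Rabs (th0 + h - th0) = Rabs h) by (f_equal; ring).
  destruct (Hexr (th0 + h)) as [L1 HL1]. rewrite Habs; lra.
  pose proof (quot_series _ _ _ _ _ _ h HL1 HL0 HLd) as HS.
  assert (Hb : Rabs ((L1 - L0) / h - Ld) <= eps' * K).
  { refine (bound_series _ a K _ eps' _ HK HS).
    intros n. unfold hahn_term. fold (a n) (x n).
    replace ((a n * g (x n) (th0 + h) - a n * g (x n) th0) / h - a n * D (x n))
      with (a n * ((g (x n) (th0 + h) - g (x n) th0) / (th0 + h - th0) - D (x n)))
      by (replace (th0 + h - th0) with h by ring; field; auto).
    rewrite Rabs_mult, Rabs_right by (apply Rle_ge; auto). rewrite Rmult_comm.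
    apply Rmult_le_compat_r; auto. left. apply Hd; auto.
    pose proof (Rabs_le_between' h 0 (m)). 
    destruct (Rabs_def2 h m) as [H1 H2]; [lra|]. lra.
    rewrite Habs. split; [apply Rabs_pos_lt; auto| lra]. }
  unfold hahn_sym_int. fold c.
  rewrite (is_series_unique _ _ HL1), (is_series_unique _ _ HL0), (is_series_unique _ _ HLd).
  replace ((c * L1 - c * L0) / h - c * Ld) with (c * ((L1 - L0) / h - Ld)) by (field; auto).
  rewrite Rabs_mult.
  apply Rle_lt_trans with (Rabs c * (eps' * K)).
  apply Rmult_le_compat_l; [apply Rabs_pos| auto].
  unfold eps'. pose proof (Rabs_pos c).
  replace (Rabs c * (eps / (2 * (Rabs c * K + 1)) * K)) with
    (eps * (Rabs c * K) / (2 * (Rabs c * K + 1))) by (field; lra).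
  apply Rmult_lt_reg_r with (2 * (Rabs c * K + 1)); [lra|].
  unfold Rdiv. rewrite Rmult_assoc, Rinv_l, Rmult_1_r by lra. nra.
Qed.
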